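(* Let $R$ be a ring and $S$ an $R$-module. The following are equivalent: (i) $S$ is an intersection flat $R$-module; (ii) for every finitely generated $R$-module $M$, property $(\#)$ holds for every family of submodules of $M$; (iii) for every finitely generated free $R$-module $M$, property $(\#)$ holds for every family of submodules of $M$; (iv) for every finitely generated $R$-module $M$ and every family $\{M_\lambda\}_{\lambda \in\Lambda}$ of submodules with $\bigcap_\lambda M_\lambda = 0$, we have $\bigcap_\lambda (S \otimes_R M_\lambda) = 0$ in $S \otimes_R M$.
   Context: All rings are commutative with identity. For an $R$-module $S$, an $R$-module $M$ and a family $\{M_\lambda\}_{\lambda\in\Lambda}$ of submodules of $M$, property $(\#)$ is the equality $S \otimes_R \left(\bigcap_\lambda M_\lambda\right) = \bigcap_\lambda (S \otimes_R M_\lambda)$, where all modules are identified with their images in $S \otimes_R M$. An $R$-module $S$ is intersection flat if $S$ is flat over $R$ and property $(\#)$ holds for every finitely generated $R$-module $M$ and every family of submodules of $M$. Note that (ii)–(iv) do not assume flatness. *)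

(* Defs.v *)
From HB Require Import structures.
From mathcomp Require Import all_boot all_order all_algebra.
Set Implicit Arguments. Unset Strict Implicit. Unset Printing Implicit Defensive.
Import GRing.Theory.
Local Open Scope ring_scope.

Section TensorDefs.
Variable R : comPzRingType.

Definition bilinear_map (S M P : lmodType R) (b : S -> M -> P) : Prop :=
  [/\ forall s1 s2 m, b (s1 + s2) m = b s1 m + b s2 m,
      forall s m1 m2, b s (m1 + m2) = b s m1 + b s m2,
      forall (r : R) s m, b (r *: s) m = r *: b s m
    & forall (r : R) s m, b s (r *: m) = r *: b s m].

(* A formal expression sum_i s_i (x) m_i, denoting an element of S (x)_R M. *)
Definition tensor_expr (S M : lmodType R) := seq (S * M).

(* Equality in S (x)_R M, via the universal property of the tensor product:
   two expressions denote the same element iff every R-bilinear map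
   S x M -> P agrees on them. *)
Definition tensor_eq (S M : lmodType R) (t1 t2 : tensor_expr S M) : Prop :=
  forall (P : lmodType R) (b : S -> M -> P), bilinear_map b ->
    \sum_(x <- t1) b x.1 x.2 = \sum_(x <- t2) b x.1 x.2.

Definition tensor_zero (S M : lmodType R) (t : tensor_expr S M) : Prop :=
  tensor_eq t [::].

(* t lies in the image of S (x)_R N in S (x)_R M (N a subset of M). *)
Definition in_tensor_image (S M : lmodType R) (N : M -> Prop)
    (t : tensor_expr S M) : Prop :=
  exists t' : tensor_expr S M, (forall x, x \in t' -> N x.2) /\ tensor_eq t t'.

Definition is_submodule (M : lmodType R) (N : M -> Prop) : Prop :=
  N 0 /\ forall (a : R) u v, N u -> N v -> N (a *: u + v).

Definition fin_gen (M : lmodType R) : Prop :=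
  exists (n : nat) (g : 'I_n -> M),
    forall m : M, exists c : 'I_n -> R, m = \sum_(i < n) c i *: g i.

Definition fin_gen_free (M : lmodType R) : Prop :=
  exists (n : nat) (e : 'I_n -> M),
    forall m : M, exists! c : {ffun 'I_n -> R}, m = \sum_(i < n) c i *: e i.

Definition prop_sharp (S M : lmodType R) (L : Type) (Ml : L -> M -> Prop)
  : Prop :=
  forall t : tensor_expr S M,
    in_tensor_image (fun m => forall l, Ml l m) t <->
    (forall l, in_tensor_image (Ml l) t).

Definition flat_module (S : lmodType R) : Prop :=
  forall (N M : lmodType R) (f : {linear N -> M}), injective f ->
    forall t : tensor_expr S N,
      tensor_zero (map (fun x => (x.1, f x.2)) t) -> tensor_zero t.

Definition intersection_flat (S : lmodType R) : Prop :=
  flat_module S /\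
  forall (M : lmodType R), fin_gen M ->
    forall (L : Type) (Ml : L -> M -> Prop),
      (forall l, is_submodule (Ml l)) -> prop_sharp S Ml.

End TensorDefs.

(* Main.v *)
Require Import Defs.
From HB Require Import structures.
From mathcomp Require Import all_boot all_order all_algebra.
From mathcomp Require Import boolp.
Set Implicit Arguments. Unset Strict Implicit. Unset Printing Implicit Defensive.
Import GRing.Theory.
Local Open Scope ring_scope.

Section SQ.
Variable R : comPzRingType.

Record setoidMod := SetoidMod {
  sm_car : Type;
  sm_E : sm_car -> sm_car -> Prop;
  sm_add : sm_car -> sm_car -> sm_car;
  sm_zero : sm_car;
  sm_opp : sm_car -> sm_car;
  sm_scl : R -> sm_car -> sm_car;
  sm_refl : forall x, sm_E x x;
  sm_sym : forall x y, sm_E x y -> sm_E y x;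
  sm_trans : forall x y z, sm_E x y -> sm_E y z -> sm_E x z;
  sm_cadd : forall x x' y y', sm_E x x' -> sm_E y y' -> sm_E (sm_add x y) (sm_add x' y');
  sm_copp : forall x x', sm_E x x' -> sm_E (sm_opp x) (sm_opp x');
  sm_cscl : forall r x x', sm_E x x' -> sm_E (sm_scl r x) (sm_scl r x');
  sm_addA : forall x y z, sm_E (sm_add x (sm_add y z)) (sm_add (sm_add x y) z);
  sm_addC : forall x y, sm_E (sm_add x y) (sm_add y x);
  sm_add0 : forall x, sm_E (sm_add sm_zero x) x;
  sm_addN : forall x, sm_E (sm_add (sm_opp x) x) sm_zero;
  sm_sclA : forall a b x, sm_E (sm_scl a (sm_scl b x)) (sm_scl (a * b) x);
  sm_scl1 : forall x, sm_E (sm_scl 1 x) x;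
  sm_sclDr : forall a x y, sm_E (sm_scl a (sm_add x y)) (sm_add (sm_scl a x) (sm_scl a y));
  sm_sclDl : forall a b x, sm_E (sm_scl (a + b) x) (sm_add (sm_scl a x) (sm_scl b x))
}.

Variable st : setoidMod.

Definition SQ := {C : sm_car st -> Prop | exists x, C = @sm_E st x}.
HB.instance Definition _ := gen_eqMixin SQ.
HB.instance Definition _ := gen_choiceMixin SQ.

Definition cls (x : sm_car st) : SQ := exist _ (@sm_E st x) (ex_intro _ x erefl).

Lemma clsP x y : cls x = cls y <-> @sm_E st x y.
Proof.
split=> [h|h].
  have := congr1 (@proj1_sig _ _) h => /= ->; exact: sm_refl.
apply: eq_exist; apply: funext => z; apply: propext; split => hz.
  exact: sm_trans (sm_sym h) hz.
exact: sm_trans h hz.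
Qed.

Definition rep (q : SQ) : sm_car st := projT1 (cid (proj2_sig q)).

Lemma repK q : cls (rep q) = q.
Proof.
rewrite /rep; case: cid => x /= hx; case: q hx => C pf /= hx.
by apply: eq_exist.
Qed.

Lemma cls_rep x : @sm_E st (rep (cls x)) x.
Proof. by apply/clsP; rewrite repK. Qed.

Lemma SQ_elim (q : SQ) : exists x, q = cls x.
Proof. by exists (rep q); rewrite repK. Qed.

Definition qadd (p q : SQ) := cls (@sm_add st (rep p) (rep q)).
Definition qopp (q : SQ) := cls (@sm_opp st (rep q)).
Definition qzero := cls (@sm_zero st).
Definition qscl r (q : SQ) := cls (@sm_scl st r (rep q)).

Lemma qaddE x y : qadd (cls x) (cls y) = cls (@sm_add st x y).
Proof. by apply/clsP; apply: sm_cadd; apply: cls_rep. Qed.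
Lemma qoppE x : qopp (cls x) = cls (@sm_opp st x).
Proof. by apply/clsP; apply: sm_copp; apply: cls_rep. Qed.
Lemma qsclE r x : qscl r (cls x) = cls (@sm_scl st r x).
Proof. by apply/clsP; apply: sm_cscl; apply: cls_rep. Qed.

Fact qaddA : associative qadd.
Proof.
move=> p q r; case: (SQ_elim p) (SQ_elim q) (SQ_elim r) => x -> [y ->] [z ->].
by rewrite !qaddE; apply/clsP; apply: sm_addA.
Qed.
Fact qaddC : commutative qadd.
Proof.
move=> p q; case: (SQ_elim p) (SQ_elim q) => x -> [y ->].
by rewrite !qaddE; apply/clsP; apply: sm_addC.
Qed.
Fact qadd0 : left_id qzero qadd.
Proof.
move=> p; case: (SQ_elim p) => x ->.
by rewrite qaddE; apply/clsP; apply: sm_add0.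
Qed.
Fact qaddN : left_inverse qzero qopp qadd.
Proof.
move=> p; case: (SQ_elim p) => x ->.
by rewrite qoppE qaddE; apply/clsP; apply: sm_addN.
Qed.

HB.instance Definition _ := GRing.isZmodule.Build SQ qaddA qaddC qadd0 qaddN.

Lemma addqE (p q : SQ) : p + q = qadd p q. Proof. by []. Qed.

Fact qsclA a b v : qscl a (qscl b v) = qscl (a * b) v.
Proof. case: (SQ_elim v) => x ->; rewrite !qsclE; apply/clsP; apply: sm_sclA. Qed.
Fact qscl1 : left_id 1 qscl.
Proof. move=> v; case: (SQ_elim v) => x ->; rewrite !qsclE; apply/clsP; apply: sm_scl1. Qed.
Fact qsclDr : right_distributive qscl (@GRing.add SQ).
Proof.
move=> a p q; case: (SQ_elim p) (SQ_elim q) => x -> [y ->].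
rewrite !addqE (qaddE x y) !qsclE qaddE; apply/clsP; apply: sm_sclDr.
Qed.
Fact qsclDl v : {morph qscl^~ v : a b / a + b}.
Proof.
move=> a b; case: (SQ_elim v) => x ->.
rewrite !addqE !qsclE (qaddE (@sm_scl st a x)); apply/clsP; apply: sm_sclDl.
Qed.

HB.instance Definition _ := GRing.Zmodule_isLmodule.Build R SQ qsclA qscl1 qsclDr qsclDl.

Lemma cls_add x y : cls (@sm_add st x y) = cls x + cls y.
Proof. by rewrite addqE qaddE. Qed.
Lemma cls_scl r x : cls (@sm_scl st r x) = r *: cls x.
Proof. by rewrite -[RHS]/(qscl _ _) qsclE. Qed.
Lemma cls_zero : cls (@sm_zero st) = 0.
Proof. by []. Qed.

End SQ.

Section Tens.
Variables (R : comPzRingType) (S M : lmodType R).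
Implicit Types (t u v w : tensor_expr S M) (D : M -> Prop).

Definition topp t : tensor_expr S M := map (fun x => (- x.1, x.2)) t.
Definition tscl (r : R) t : tensor_expr S M := map (fun x => (r *: x.1, x.2)) t.
Definition bsum (P : lmodType R) (b : S -> M -> P) t := \sum_(x <- t) b x.1 x.2.
Definition inD D t := forall x, x \in t -> D x.2.

Definition bilinear_on D (P : lmodType R) (b : S -> M -> P) : Prop :=
  [/\ forall s1 s2 m, D m -> b (s1 + s2) m = b s1 m + b s2 m,
      forall s m1 m2, D m1 -> D m2 -> b s (m1 + m2) = b s m1 + b s m2,
      forall (r : R) s m, D m -> b (r *: s) m = r *: b s m
    & forall (r : R) s m, D m -> b s (r *: m) = r *: b s m].

Definition teq_on D t u := forall (P : lmodType R) (b : S -> M -> P),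
  bilinear_on D b -> bsum b t = bsum b u.

Lemma bilinear_onT (P : lmodType R) (b : S -> M -> P) :
  bilinear_map b -> bilinear_on (fun _ => True) b.
Proof. by case=> h1 h2 h3 h4; split=> *; rewrite ?h1 ?h2 ?h3 ?h4. Qed.

Lemma bilinear_on_mono D D' (P : lmodType R) (b : S -> M -> P) :
  (forall m, D' m -> D m) -> bilinear_on D b -> bilinear_on D' b.
Proof. by move=> hD [h1 h2 h3 h4]; split=> *; rewrite ?h1 ?h2 ?h3 ?h4 //; apply: hD. Qed.

Lemma bsum_cat (P : lmodType R) (b : S -> M -> P) t u :
  bsum b (t ++ u) = bsum b t + bsum b u.
Proof. by rewrite /bsum big_cat. Qed.

Lemma bsum_nil (P : lmodType R) (b : S -> M -> P) : bsum b [::] = 0.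
Proof. by rewrite /bsum big_nil. Qed.

Lemma bsum_cons (P : lmodType R) (b : S -> M -> P) x t :
  bsum b (x :: t) = b x.1 x.2 + bsum b t.
Proof. by rewrite /bsum big_cons. Qed.

Lemma inD_cat D t u : inD D (t ++ u) <-> inD D t /\ inD D u.
Proof.
split=> [h|[h1 h2] x]; first by split=> x hx; apply: h; rewrite mem_cat hx ?orbT.
by rewrite mem_cat => /orP[]; [apply: h1|apply: h2].
Qed.

Lemma inD_cons D x t : inD D (x :: t) <-> D x.2 /\ inD D t.
Proof.
split=> [h|[h1 h2] y]; first by split; [apply: h; rewrite inE eqxx|move=> y hy; apply: h; rewrite inE hy orbT].
by rewrite inE => /orP[/eqP->|]; [|apply: h2].
Qed.

Lemma inD_map D (f : S -> S) t : inD D t -> inD D (map (fun x => (f x.1, x.2)) t).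
Proof.
elim: t => [|x t IH] h y //=; move/inD_cons: h => [h1 h2].
by rewrite inE => /orP[/eqP->|hy] //; apply: IH.
Qed.

Lemma inD_topp D t : inD D t -> inD D (topp t).
Proof. exact: inD_map. Qed.
Lemma inD_tscl D r t : inD D t -> inD D (tscl r t).
Proof. exact: inD_map. Qed.

Lemma bsum_scl D (P : lmodType R) (b : S -> M -> P) r t :
  inD D t -> bilinear_on D b -> bsum b (tscl r t) = r *: bsum b t.
Proof.
move=> ht [_ _ h3 _]; elim: t ht => [|x t IH] ht.
  by rewrite /tscl /= !bsum_nil scaler0.
move/inD_cons: ht => [h1 h2].
by rewrite /tscl /= !bsum_cons /= h3 // IH // scalerDr.
Qed.

Lemma bsum_opp D (P : lmodType R) (b : S -> M -> P) t :
  inD D t -> bilinear_on D b -> bsum b (topp t) = - bsum b t.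
Proof.
move=> ht hb; have -> : topp t = tscl (-1) t.
  by apply: eq_map => x; rewrite scaleN1r.
by rewrite (bsum_scl _ ht hb) scaleN1r.
Qed.

Definition lawE t u := forall D (P : lmodType R) (b : S -> M -> P),
  inD D t -> inD D u -> bilinear_on D b -> bsum b t = bsum b u.

Lemma lawE_refl t u : t = u -> lawE t u.
Proof. by move=> -> *. Qed.

Lemma lawE_addC t u : lawE (t ++ u) (u ++ t).
Proof. by move=> *; rewrite !bsum_cat addrC. Qed.

Lemma lawE_addN t : lawE (topp t ++ t) [::].
Proof.
move=> D P b /inD_cat[h1 h2] _ hb.
by rewrite bsum_cat (bsum_opp h2 hb) addNr bsum_nil.
Qed.

Lemma lawE_sclDl a c t : lawE (tscl (a + c) t) (tscl a t ++ tscl c t).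
Proof.
move=> D P b h1 /inD_cat[h2 h3] hb.
have ht : inD D t.
  move=> x hx; have := h1 (((a + c) *: x.1), x.2); apply.
  by apply/mapP; exists x.
by rewrite bsum_cat !(bsum_scl _ ht hb) scalerDl.
Qed.

Lemma tsclA a c t : tscl a (tscl c t) = tscl (a * c) t.
Proof. by rewrite /tscl -map_comp; apply: eq_map => x /=; rewrite scalerA. Qed.
Lemma tscl1 t : tscl 1 t = t.
Proof. by rewrite /tscl (eq_map (g := id)) ?map_id // => -[x y] /=; rewrite scale1r. Qed.
Lemma tsclDr a t u : tscl a (t ++ u) = tscl a t ++ tscl a u.
Proof. by rewrite /tscl map_cat. Qed.

Record tsetoid := TSetoid {
  ts_E : tensor_expr S M -> tensor_expr S M -> Prop;
  ts_sym : forall x y, ts_E x y -> ts_E y x;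
  ts_trans : forall x y z, ts_E x y -> ts_E y z -> ts_E x z;
  ts_cadd : forall x x' y y', ts_E x x' -> ts_E y y' -> ts_E (x ++ y) (x' ++ y');
  ts_copp : forall x x', ts_E x x' -> ts_E (topp x) (topp x');
  ts_cscl : forall r x x', ts_E x x' -> ts_E (tscl r x) (tscl r x');
  ts_law : forall x y, lawE x y -> ts_E x y
}.

Definition ts_setoid (T : tsetoid) : setoidMod R.
Proof.
refine (@SetoidMod R (tensor_expr S M) (ts_E T) cat [::] topp tscl _ _ _ _ _ _ _ _ _ _ _ _ _ _).
- by move=> x; apply: ts_law; apply: lawE_refl.
- exact: ts_sym.
- exact: ts_trans.
- exact: ts_cadd.
- exact: ts_copp.
- exact: ts_cscl.
- by move=> *; apply: ts_law; apply: lawE_refl; rewrite catA.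
- by move=> *; apply: ts_law; apply: lawE_addC.
- by move=> *; apply: ts_law; apply: lawE_refl.
- by move=> *; apply: ts_law; apply: lawE_addN.
- by move=> *; apply: ts_law; apply: lawE_refl; rewrite tsclA.
- by move=> *; apply: ts_law; apply: lawE_refl; rewrite tscl1.
- by move=> *; apply: ts_law; apply: lawE_refl; rewrite tsclDr.
- by move=> *; apply: ts_law; apply: lawE_sclDl.
Defined.

Lemma ts_univ (T : tsetoid) :
  (forall s m1 m2, ts_E T [:: (s, m1 + m2)] [:: (s, m1); (s, m2)]) ->
  (forall (r : R) s m, ts_E T [:: (s, r *: m)] [:: (r *: s, m)]) ->
  forall t u, tensor_eq t u -> ts_E T t u.
Proof.
move=> hadd hscl t u htu.
pose st := ts_setoid T.
pose b0 (s : S) (m : M) : SQ st := cls (st := st) [:: (s, m)].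
have hb0 : bilinear_map b0.
  split.
  - move=> s1 s2 m; rewrite /b0 -cls_add; apply/clsP; apply: ts_law => D P b /= h _ hb.
    case: hb => [h1 _ _ _]; rewrite /= !bsum_cons !bsum_nil /= !addr0 h1 //.
    by case/inD_cons: h.
  - move=> s m1 m2; rewrite /b0 -cls_add; apply/clsP; exact: hadd.
  - by move=> r s m; rewrite /b0 -cls_scl.
  - move=> r s m; rewrite /b0 -cls_scl; apply/clsP; exact: hscl.
have sumE w : bsum b0 w = cls (st := st) w.
  elim: w => [|[s m] w IH]; first by rewrite bsum_nil.
  by rewrite bsum_cons IH /b0 -cls_add.
have := htu _ _ hb0; rewrite -!/(bsum b0 _) !sumE => /clsP; exact.
Qed.

End Tens.

Section Lin.
Variables (R : comPzRingType) (M N : lmodType R).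
Definition lin (f : M -> N) := forall (a : R) x y, f (a *: x + y) = a *: f x + f y.
Variable f : M -> N.
Hypothesis hf : lin f.
Lemma lin0 : f 0 = 0.
Proof. have h := hf 1 0 0; rewrite !scale1r addr0 in h. by apply: (addrI (f 0)); rewrite addr0 -h. Qed.
Lemma linD x y : f (x + y) = f x + f y.
Proof. by have := hf 1 x y; rewrite !scale1r. Qed.
Lemma linZ a x : f (a *: x) = a *: f x.
Proof. by have := hf a x 0; rewrite !addr0 lin0 addr0. Qed.
Lemma linN x : f (- x) = - f x.
Proof. by rewrite -scaleN1r linZ scaleN1r. Qed.
Lemma linB x y : f (x - y) = f x - f y.
Proof. by rewrite linD linN. Qed.
End Lin.

Definition tmap (R : comPzRingType) (S M N : lmodType R) (f : M -> N)
  (t : tensor_expr S M) : tensor_expr S N := map (fun x => (x.1, f x.2)) t.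

Section TensorFacts.
Variables (R : comPzRingType) (S M : lmodType R).
Implicit Types (t u v w : tensor_expr S M).

Lemma teq_bsum t u (P : lmodType R) (b : S -> M -> P) :
  tensor_eq t u -> bilinear_map b -> bsum b t = bsum b u.
Proof. by move=> h hb; apply: h. Qed.

Lemma inDT t : inD (fun _ => True) t. Proof. by []. Qed.

Lemma bsum_oppT (P : lmodType R) (b : S -> M -> P) t :
  bilinear_map b -> bsum b (topp t) = - bsum b t.
Proof. by move=> hb; apply: (bsum_opp (inDT (t:=t)) (bilinear_onT hb)). Qed.
Lemma bsum_sclT (P : lmodType R) (b : S -> M -> P) r t :
  bilinear_map b -> bsum b (tscl r t) = r *: bsum b t.
Proof. by move=> hb; apply: (bsum_scl _ (inDT (t:=t)) (bilinear_onT hb)). Qed.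

Lemma teq_refl t : tensor_eq t t. Proof. by []. Qed.
Lemma teq_sym t u : tensor_eq t u -> tensor_eq u t.
Proof. by move=> h P b hb; change (bsum b u = bsum b t); rewrite (teq_bsum h hb). Qed.
Lemma teq_trans t u w : tensor_eq t u -> tensor_eq u w -> tensor_eq t w.
Proof. by move=> h1 h2 P b hb; change (bsum b t = bsum b w); rewrite (teq_bsum h1 hb) (teq_bsum h2 hb). Qed.
Lemma teq_cat t t' u u' : tensor_eq t t' -> tensor_eq u u' -> tensor_eq (t ++ u) (t' ++ u').
Proof. by move=> h1 h2 P b hb; change (bsum b (t ++ u) = bsum b (t' ++ u')); rewrite !bsum_cat (teq_bsum h1 hb) (teq_bsum h2 hb). Qed.
Lemma teq_law t u : lawE t u -> tensor_eq t u.
Proof. by move=> h P b hb; apply: (h (fun _ => True)) => //; apply: bilinear_onT. Qed.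

Lemma tensor_zeroP t : (forall x, x \in t -> x.2 = 0) -> tensor_zero t.
Proof.
move=> h P b [_ h2 _ _]; rewrite -[RHS]/(bsum b [::]) bsum_nil.
elim: t h => [|x t IH] h; first by rewrite big_nil.
rewrite big_cons IH ?(h x) ?inE ?eqxx //; last by move=> y hy; apply: h; rewrite inE hy orbT.
have e := h2 x.1 0 0; rewrite addr0 in e.
have -> : b x.1 0 = 0 by apply: (addrI (b x.1 0)); rewrite addr0 -e.
by rewrite addr0.
Qed.

End TensorFacts.

Section TmapFacts.
Variables (R : comPzRingType) (S M N : lmodType R) (f : M -> N).
Hypothesis hf : lin f.

Lemma bilin_comp (P : lmodType R) (b : S -> N -> P) :
  bilinear_map b -> bilinear_map (fun s m => b s (f m)).
Proof.
case=> h1 h2 h3 h4; split=> *; rewrite ?h1 ?h3 //.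
  by rewrite (linD hf) h2.
by rewrite (linZ hf) h4.
Qed.

Lemma bsum_tmap (P : lmodType R) (b : S -> N -> P) (t : tensor_expr S M) :
  bsum b (tmap f t) = bsum (fun s m => b s (f m)) t.
Proof. by rewrite /bsum /tmap big_map. Qed.

Lemma teq_tmap (t u : tensor_expr S M) : tensor_eq t u -> tensor_eq (tmap f t) (tmap f u).
Proof.
move=> h P b hb; rewrite -!/(bsum b _) !bsum_tmap.
exact: (h _ _ (bilin_comp hb)).
Qed.

Lemma tmap_cat (t u : tensor_expr S M) : tmap f (t ++ u) = tmap f t ++ tmap f u.
Proof. by rewrite /tmap map_cat. Qed.

Lemma inD_tmap (D : N -> Prop) (t : tensor_expr S M) :
  (forall x, x \in t -> D (f x.2)) -> inD D (tmap f t).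
Proof. by move=> h y /mapP[x hx ->]; apply: h. Qed.

End TmapFacts.

(* the setoid of expressions modulo the image of S (x) K *)
Section EN.
Variables (R : comPzRingType) (S F : lmodType R) (K : F -> Prop).
Implicit Types (t u v w : tensor_expr S F).

Definition EN t u := exists v, inD K v /\ tensor_eq t (u ++ v).

Definition EN_setoid : tsetoid S F.
Proof.
refine (@TSetoid R S F EN _ _ _ _ _ _).
- move=> x y [v [hv h]]; exists (topp v); split; first exact: inD_topp.
  move=> P b hb; rewrite -!/(bsum b _) bsum_cat (teq_bsum h hb) bsum_cat bsum_oppT //.
  by rewrite addrK.
- move=> x y z [v [hv h]] [v' [hv' h']]; exists (v' ++ v); split.
    by apply/inD_cat.
  by move=> P b hb; rewrite -!/(bsum b _) (teq_bsum h hb) bsum_cat (teq_bsum h' hb) !bsum_cat addrA.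
- move=> x x' y y' [v [hv h]] [v' [hv' h']]; exists (v ++ v'); split.
    by apply/inD_cat.
  move=> P b hb; rewrite -!/(bsum b _) !bsum_cat (teq_bsum h hb) (teq_bsum h' hb) !bsum_cat.
  by rewrite addrACA.
- move=> x x' [v [hv h]]; exists (topp v); split; first exact: inD_topp.
  by move=> P b hb; rewrite -!/(bsum b _) bsum_cat !bsum_oppT // (teq_bsum h hb) bsum_cat opprD.
- move=> r x x' [v [hv h]]; exists (tscl r v); split; first exact: inD_tscl.
  by move=> P b hb; rewrite -!/(bsum b _) bsum_cat !bsum_sclT // (teq_bsum h hb) bsum_cat scalerDr.
- move=> x y h; exists [::]; split => //; rewrite cats0; exact: teq_law.
Defined.

End EN.

Section RX.
Variables (R : comPzRingType) (S F M : lmodType R) (phi : F -> M).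
Hypothesis hphi : lin phi.
Hypothesis phi_surj : forall m, exists x, phi x = m.

Lemma right_exact (t u : tensor_expr S F) :
  tensor_eq (tmap phi t) (tmap phi u) ->
  exists v, inD (fun x => phi x = 0) v /\ tensor_eq t (u ++ v).
Proof.
move=> h.
pose T := EN_setoid S (fun x => phi x = 0).
pose st := ts_setoid T.
pose pre (m : M) : F := projT1 (cid (phi_surj m)).
have preK m : phi (pre m) = m by rewrite /pre; case: cid.
have single (s : S) p q : phi p = phi q -> EN (fun x => phi x = 0) [:: (s, p)] [:: (s, q)].
  move=> hpq; exists [:: (s, p - q)]; split.
    by move=> x; rewrite inE => /eqP -> /=; rewrite (linB hphi) hpq subrr.
  move=> P b [_ h2 _ _]; rewrite -!/(bsum b _) /= !bsum_cons !bsum_nil /= !addr0 -h2.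
  by rewrite addrC subrK.
pose b (s : S) (m : M) : SQ st := cls (st := st) [:: (s, pre m)].
have hb : bilinear_map b.
  split.
  - move=> s1 s2 m; rewrite /b -cls_add; apply/clsP; apply: ts_law => D P c /= hD _ hc.
    case: hc => [h1 _ _ _]; rewrite /= !bsum_cons !bsum_nil /= !addr0 h1 //.
    by case/inD_cons: hD.
  - move=> s m1 m2; rewrite /b -cls_add; apply/clsP.
    apply: (@ts_trans _ _ _ T _ [:: (s, pre m1 + pre m2)]).
      by apply: single; rewrite (linD hphi) !preK.
    apply: ts_law => D P c /= _ hD hc.
    case: hc => [_ h2 _ _]; rewrite /= !bsum_cons !bsum_nil /= !addr0 h2 //.
      by case/inD_cons: hD.
    by case/inD_cons: hD => _ /inD_cons [].
  - by move=> r s m; rewrite /b -cls_scl.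
  - move=> r s m; rewrite /b -cls_scl; apply/clsP.
    apply: (@ts_trans _ _ _ T _ [:: (s, r *: pre m)]).
      by apply: single; rewrite (linZ hphi) !preK.
    apply: ts_law => D P c /= _ hD hc.
    case: hc => [_ _ h3 h4]; rewrite /= !bsum_cons !bsum_nil /= !addr0 h3 ?h4 //;
      by case/inD_cons: hD.
have sumE w : bsum b (tmap phi w) = cls (st := st) w.
  elim: w => [|[s0 m] w IH]; first by rewrite bsum_nil.
  rewrite /tmap /= bsum_cons /= -/(tmap phi w) IH /b.
  have -> : cls (st:=st) ((s0, m) :: w) = cls (st:=st) [:: (s0, m)] + cls (st:=st) w.
    by rewrite -cls_add.
  by congr (_ + _); apply/clsP; apply: single; rewrite preK.
have := h _ _ hb; rewrite -!/(bsum b _) !sumE => /clsP; exact.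
Qed.

End RX.

Section Span.
Variables (R : comPzRingType) (M : lmodType R).

Inductive tspan (g : seq M) : M -> Prop :=
| span0 : tspan g 0
| spang m : m \in g -> tspan g m
| spanC (a : R) u v : tspan g u -> tspan g v -> tspan g (a *: u + v).

Lemma spanD g u v : tspan g u -> tspan g v -> tspan g (u + v).
Proof. by move=> hu hv; have := spanC 1 hu hv; rewrite scale1r. Qed.
Lemma spanZ g a u : tspan g u -> tspan g (a *: u).
Proof. by move=> hu; have := spanC a hu (span0 g); rewrite addr0. Qed.

Lemma span_mono g g' m : (forall x, x \in g -> tspan g' x) -> tspan g m -> tspan g' m.
Proof.
move=> h; elim=> [|x hx|a u v _ hu _ hv]; first exact: span0.
  exact: h.
exact: spanC.
Qed.

Lemma span_catl g g' m : tspan g m -> tspan (g ++ g') m.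
Proof. by apply: span_mono => x hx; apply: spang; rewrite mem_cat hx. Qed.
Lemma span_catr g g' m : tspan g' m -> tspan (g ++ g') m.
Proof. by apply: span_mono => x hx; apply: spang; rewrite mem_cat hx orbT. Qed.

End Span.

Section Eg.
Variables (R : comPzRingType) (S M : lmodType R).
Implicit Types (t u v w : tensor_expr S M).

Lemma inD_span t : inD (tspan (map snd t)) t.
Proof. by move=> x hx; apply: spang; apply/mapP; exists x. Qed.

Lemma inD_mono (D D' : M -> Prop) t : (forall m, D m -> D' m) -> inD D t -> inD D' t.
Proof. by move=> h ht x hx; apply: h; apply: ht. Qed.

Definition Eg t u := exists g : seq M,
  [/\ inD (tspan g) t, inD (tspan g) u & teq_on (tspan g) t u].

Definition Eg_setoid : tsetoid S M.
Proof.
refine (@TSetoid R S M Eg _ _ _ _ _ _).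
- move=> x y [g [h1 h2 h3]]; exists g; split => // P b hb; symmetry; exact: h3.
- move=> x y z [g [h1 h2 h3]] [g' [h1' h2' h3']]; exists (g ++ g'); split.
  + by apply: inD_mono h1 => m; apply: span_catl.
  + by apply: inD_mono h2' => m; apply: span_catr.
  + move=> P b hb; rewrite (h3 P b); last by apply: bilinear_on_mono hb => m; apply: span_catl.
    by apply: h3'; apply: bilinear_on_mono hb => m; apply: span_catr.
- move=> x x' y y' [g [h1 h2 h3]] [g' [h1' h2' h3']]; exists (g ++ g'); split.
  + apply/inD_cat; split; [apply: inD_mono h1|apply: inD_mono h1'] => m;
      [apply: span_catl|apply: span_catr].
  + apply/inD_cat; split; [apply: inD_mono h2|apply: inD_mono h2'] => m;
      [apply: span_catl|apply: span_catr].
  + move=> P b hb; rewrite !bsum_cat (h3 P b) ?(h3' P b) //.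
      by apply: bilinear_on_mono hb => m; apply: span_catr.
    by apply: bilinear_on_mono hb => m; apply: span_catl.
- move=> x x' [g [h1 h2 h3]]; exists g; split; try exact: inD_topp.
  by move=> P b hb; rewrite (bsum_opp h1 hb) (bsum_opp h2 hb) (h3 P b hb).
- move=> r x x' [g [h1 h2 h3]]; exists g; split; try exact: inD_tscl.
  by move=> P b hb; rewrite (bsum_scl _ h1 hb) (bsum_scl _ h2 hb) (h3 P b hb).
- move=> x y h; exists (map snd (x ++ y)).
  have [h1 h2] := (inD_cat _ x y).1 (inD_span (t:=x ++ y)).
  by split => // P b hb; apply: (h _ P b h1 h2 hb).
Defined.

Lemma finite_reduction t u : tensor_eq t u -> Eg t u.
Proof.
apply: (ts_univ (T := Eg_setoid)).
- move=> s m1 m2; exists [:: m1; m2]; split.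
  + move=> x; rewrite inE => /eqP -> /=; apply: spanD; apply: spang; by rewrite !inE eqxx ?orbT.
  + move=> x; rewrite !inE => /orP[] /eqP -> /=; apply: spang; by rewrite !inE eqxx ?orbT.
  + move=> P b [_ h2 _ _]; rewrite !bsum_cons !bsum_nil /= !addr0 h2 //;
      by apply: spang; rewrite !inE eqxx ?orbT.
- move=> r s m; exists [:: m]; split.
  + move=> x; rewrite inE => /eqP -> /=; apply: spanZ; apply: spang; by rewrite !inE eqxx.
  + move=> x; rewrite inE => /eqP -> /=; apply: spang; by rewrite !inE eqxx.
  + move=> P b [_ _ h3 h4]; rewrite !bsum_cons !bsum_nil /= !addr0 h3 ?h4 //;
      by apply: spang; rewrite !inE eqxx.
Qed.

End Eg.

Lemma lin_sum (R : comPzRingType) (M N : lmodType R) (f : M -> N) (hf : lin f)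
  n (c : 'I_n -> R) (g : 'I_n -> M) :
  f (\sum_(i < n) c i *: g i) = \sum_(i < n) c i *: f (g i).
Proof.
elim/big_rec2: _ => [|i y1 y2 _ <-]; first exact: lin0.
by rewrite hf.
Qed.

Section SubmodFacts.
Variables (R : comPzRingType) (M : lmodType R) (N : M -> Prop).
Hypothesis hN : is_submodule N.
Lemma subm0 : N 0. Proof. by case: hN. Qed.
Lemma submD x y : N x -> N y -> N (x + y).
Proof. by case: hN => _ h hx hy; have := h 1 _ _ hx hy; rewrite scale1r. Qed.
Lemma submZ a x : N x -> N (a *: x).
Proof. by case: hN => h0 h hx; have := h a _ _ hx h0; rewrite addr0. Qed.
Lemma submN x : N x -> N (- x).
Proof. by move=> hx; rewrite -scaleN1r; apply: submZ. Qed.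
Lemma submB x y : N x -> N y -> N (x - y).
Proof. by move=> hx hy; apply: submD => //; apply: submN. Qed.
End SubmodFacts.

Section Quot.
Variables (R : comPzRingType) (M : lmodType R) (N : M -> Prop).
Hypothesis hN : is_submodule N.

Lemma Neq x y : x = y -> N (x - y).
Proof. by move=> ->; rewrite subrr; apply: subm0. Qed.

Definition quot_setoid : setoidMod R.
Proof.
refine (@SetoidMod R M (fun x y => N (x - y)) +%R 0 -%R *:%R _ _ _ _ _ _ _ _ _ _ _ _ _ _).
- by move=> x; rewrite subrr; apply: subm0.
- by move=> x y h; rewrite -opprB; apply: submN.
- by move=> x y z h1 h2; have := submD hN h1 h2; rewrite addrA subrK.
- move=> x x' y y' h1 h2; have := submD hN h1 h2.
  by rewrite opprD addrACA.
- by move=> x x' h; rewrite -opprD; apply: submN.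
- by move=> r x x' h; rewrite -scalerBr; apply: submZ.
- by move=> x y z; apply: Neq; rewrite /= addrA.
- by move=> x y; apply: Neq; rewrite /= addrC.
- by move=> x; apply: Neq; rewrite /= add0r.
- by move=> x; apply: Neq; rewrite /= addNr.
- by move=> a b x; apply: Neq; rewrite /= scalerA.
- by move=> x; apply: Neq; rewrite /= scale1r.
- by move=> a x y; apply: Neq; rewrite /= scalerDr.
- by move=> a b x; apply: Neq; rewrite /= scalerDl.
Defined.

Definition Quot := SQ quot_setoid.
Definition qpi (x : M) : Quot := cls (st := quot_setoid) x.

Lemma qpi_lin : lin qpi.
Proof. by move=> a x y; rewrite /qpi -cls_scl -cls_add. Qed.

Lemma qpi_surj q : exists x, qpi x = q.
Proof. by case: (SQ_elim q) => x ->; exists x. Qed.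

Lemma qpiP x y : qpi x = qpi y <-> N (x - y).
Proof. exact: clsP. Qed.

Lemma qpi_eq0 x : qpi x = 0 <-> N x.
Proof. by rewrite -[0 : Quot]/(qpi 0) qpiP subr0. Qed.

Lemma fin_gen_quot : fin_gen M -> fin_gen Quot.
Proof.
case=> n [g hg]; exists n, (fun i => qpi (g i)) => q.
case: (qpi_surj q) => x <-; case: (hg x) => c ->; exists c.
exact: (lin_sum qpi_lin).
Qed.

Definition qrep (q : Quot) : M := rep q.
Lemma qrepK q : qpi (qrep q) = q. Proof. exact: repK. Qed.

End Quot.

Lemma rV_fin_gen_free (R : comPzRingType) n : fin_gen_free ('rV[R]_n).
Proof.
exists n, (fun i => delta_mx 0 i) => m; exists [ffun i => m 0 i]; split.
  by rewrite [LHS]row_sum_delta; apply: eq_bigr => i _; rewrite ffunE.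
move=> c hc; apply/ffunP => j; rewrite ffunE hc summxE.
rewrite (bigD1 j) //= big1 ?addr0; first by rewrite !mxE eqxx /= eqxx mulr1.
by move=> i hij; rewrite !mxE eqxx /= eq_sym (negbTE hij) mulr0.
Qed.

Lemma fin_gen_free_gen (R : comPzRingType) (M : lmodType R) : fin_gen_free M -> fin_gen M.
Proof.
case=> n [e he]; exists n, e => m; case: (he m) => c [hc _]; by exists c.
Qed.

Section Comb.
Variables (R : comPzRingType) (M : lmodType R) (n : nat) (g : 'I_n -> M).
Definition comb (x : 'rV[R]_n) : M := \sum_(i < n) x 0 i *: g i.
Lemma comb_lin : lin comb.
Proof.
move=> a x y; rewrite /comb scaler_sumr -big_split; apply: eq_bigr => i _.
by rewrite !mxE scalerDl scalerA.
Qed.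
Lemma comb_delta i : comb (delta_mx 0 i) = g i.
Proof.
rewrite /comb (bigD1 i) //= big1 ?addr0; first by rewrite !mxE !eqxx scale1r.
by move=> j hj; rewrite !mxE eqxx /= (negbTE hj) scale0r.
Qed.
End Comb.

Lemma lift_expr (R : comPzRingType) (S F M : lmodType R) (phi : F -> M)
  (surj : forall m, exists x, phi x = m) :
  exists lft : tensor_expr S M -> tensor_expr S F,
    forall w, tmap phi (lft w) = w /\
      forall x, x \in lft w -> exists y, y \in w /\ phi x.2 = y.2.
Proof.
pose pre (m : M) : F := projT1 (cid (surj m)).
have preK m : phi (pre m) = m by rewrite /pre; case: cid.
exists (fun w => map (fun x => (x.1, pre x.2)) w) => w; split.
  rewrite /tmap -map_comp -[RHS]map_id; apply: eq_map => -[s m] /=.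
  by rewrite preK.
move=> x /mapP[y hy ->]; exists y; split => //=; exact: preK.
Qed.

Section Step34.
Variables (R : comPzRingType) (S : lmodType R).

Lemma step34 :
  (forall (M : lmodType R), fin_gen_free M ->
         forall (L : Type) (Ml : L -> M -> Prop),
           (forall l, is_submodule (Ml l)) -> prop_sharp S Ml) ->
  (forall (M : lmodType R), fin_gen M ->
         forall (L : Type) (Ml : L -> M -> Prop),
           (forall l, is_submodule (Ml l)) ->
           (forall m : M, (forall l, Ml l m) -> m = 0) ->
           forall t : tensor_expr S M,
             (forall l, in_tensor_image (Ml l) t) -> tensor_zero t).
Proof.
move=> h3 M [n [g hg]] L Ml hsub hint t ht.
pose phi := comb g.
have hphi : lin phi := comb_lin g.
have surj m : exists x, phi x = m.
  case: (hg m) => c ->; exists (\row_i c i); rewrite /phi /comb.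
  by apply: eq_bigr => i _; rewrite mxE.
have [lft hlft] := lift_expr S surj.
pose Fl l := fun x => Ml l (phi x).
have hFl l : is_submodule (Fl l).
  split; first by rewrite /Fl (lin0 hphi); case: (hsub l).
  by move=> a u v; rewrite /Fl hphi; case: (hsub l) => _; apply.
have hsh := h3 _ (rV_fin_gen_free R n) L Fl hFl.
have himg l : in_tensor_image (Fl l) (lft t).
  case: (ht l) => t' [h1 h2].
  have [e1 _] := hlft t; have [e2 h2'] := hlft t'.
  have := @right_exact R S _ _ phi hphi surj (lft t) (lft t').
  rewrite e1 e2 => /(_ h2) [v [hv hteq]].
  exists (lft t' ++ v); split => //.
  move=> x; rewrite mem_cat => /orP[hx|hx].
    case: (h2' x hx) => y [hy e]; rewrite /Fl e; exact: h1.
  rewrite /Fl (hv x hx); by case: (hsub l).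
case: ((hsh (lft t)).2 himg) => w [hw hteq].
have [e1 _] := hlft t.
have := teq_tmap hphi hteq; rewrite e1 => h.
apply: teq_trans h _; apply: tensor_zeroP => x /mapP[y hy ->] /=.
by apply: hint => l; apply: hw.
Qed.

End Step34.

Section Step41.
Variables (R : comPzRingType) (S : lmodType R).

Definition cond4 := forall (M : lmodType R), fin_gen M ->
         forall (L : Type) (Ml : L -> M -> Prop),
           (forall l, is_submodule (Ml l)) ->
           (forall m : M, (forall l, Ml l m) -> m = 0) ->
           forall t : tensor_expr S M,
             (forall l, in_tensor_image (Ml l) t) -> tensor_zero t.

Lemma step41_sharp : cond4 ->
  forall (M : lmodType R), fin_gen M ->
    forall (L : Type) (Ml : L -> M -> Prop),
      (forall l, is_submodule (Ml l)) -> prop_sharp S Ml.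
Proof.
move=> h4 M hM L Ml hsub t; split.
  by case=> t' [h1 h2] l; exists t'; split => // x hx; apply: h1.
move=> hl.
pose N := fun m => forall l, Ml l m.
have hN : is_submodule N.
  split; first by move=> l; case: (hsub l).
  by move=> a u v hu hv l; case: (hsub l) => _; apply.
pose Ql l := fun q : Quot hN => exists m, Ml l m /\ qpi hN m = q.
have hQl l : is_submodule (Ql l).
  split; first by exists 0; split; [case: (hsub l)|].
  move=> a u v [mu [h1 <-]] [mv [h2 <-]]; exists (a *: mu + mv); split.
    by case: (hsub l) => _; apply.
  exact: qpi_lin.
have hint q : (forall l, Ql l q) -> q = 0.
  case: (qpi_surj q) => m <- hq; apply/qpi_eq0 => l.
  case: (hq l) => ml [hml /qpiP hd].
  have := submB (hsub l) hml (hd l); rewrite opprB addrC subrK; exact.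
have hz : tensor_zero (tmap (qpi hN) t).
  apply: (h4 _ (fin_gen_quot hN hM) _ _ hQl hint) => l.
  case: (hl l) => t' [h1 h2]; exists (tmap (qpi hN) t'); split.
    by move=> x /mapP[y hy ->]; exists y.2; split => //; apply: h1.
  exact: (@teq_tmap R S M (Quot hN) (qpi hN) (qpi_lin hN) t t' h2).
have := @right_exact R S _ _ (qpi hN) (qpi_lin hN) (@qpi_surj _ _ _ hN) t [::] hz.
case=> v [hv hteq]; exists v; split => // x hx.
by apply/(qpi_eq0 hN); apply: hv.
Qed.

Lemma step41_flat : cond4 -> flat_module S.
Proof.
move=> h4 N M f finj t hz.
have hf : lin f by move=> a x y; apply: linearP.
have hz' : tensor_zero (tmap f t) := hz.
case: (finite_reduction hz') => g [hg1 _ hg3].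
pose h := map snd t.
pose G : seq (M * N)%type := map (fun m => (m, 0)) g ++ map (fun n => (0, n)) h.
pose k := size G.
pose Phi := comb (fun i : 'I_k => G`_i).
have hPhi : lin Phi := comb_lin _.
pose K := fun x => Phi x = 0.
have hK : is_submodule K.
  split; first exact: lin0 hPhi.
  by move=> a u v hu hv; rewrite /K hPhi hu hv scaler0 addr0.
pose psi (q : Quot hK) := Phi (qrep q).
have psiE x : psi (qpi hK x) = Phi x.
  have := qrepK (qpi hK x); rewrite qpiP /K (linB hPhi) => /eqP.
  by rewrite subr_eq0 => /eqP.
have hpsi : lin psi.
  move=> a q1 q2; case: (qpi_surj q1) (qpi_surj q2) => x1 <- [x2 <-].
  by rewrite -qpi_lin !psiE hPhi.
have psi_inj q1 q2 : psi q1 = psi q2 -> q1 = q2.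
  case: (qpi_surj q1) (qpi_surj q2) => x1 <- [x2 <-]; rewrite !psiE => e.
  by apply/qpiP; rewrite /K (linB hPhi) e subrr.
pose Im y := exists q, psi q = y.
have spanG_Im y : tspan G y -> Im y.
  elim=> [|m hm|a u v _ [qu hu] _ [qv hv]].
  - by exists 0; apply: (lin0 hpsi).
  - have hi : (index m G < k)%N by rewrite index_mem.
    exists (qpi hK (delta_mx 0 (Ordinal hi))); rewrite psiE /Phi comb_delta /=.
    exact: nth_index.
  - by exists (a *: qu + qv); rewrite hpsi hu hv.
pose lft y : Quot hK := if pselect (Im y) is left e then projT1 (cid e) else 0.
have lftK y : Im y -> psi (lft y) = y.
  by move=> hy; rewrite /lft; case: pselect => // e; case: cid.
have ImD y1 y2 : Im y1 -> Im y2 -> Im (y1 + y2).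
  by move=> [q1 <-] [q2 <-]; exists (q1 + q2); apply: (linD hpsi).
have ImZ a y : Im y -> Im (a *: y).
  by move=> [q <-]; exists (a *: q); apply: (linZ hpsi).
have lft_add y1 y2 : Im y1 -> Im y2 -> lft (y1 + y2) = lft y1 + lft y2.
  move=> h1 h2; apply: psi_inj; rewrite lftK ?(linD hpsi) ?lftK //; exact: ImD.
have lft_scl a y : Im y -> lft (a *: y) = a *: lft y.
  move=> h1; apply: psi_inj; rewrite lftK ?(linZ hpsi) ?lftK //; exact: ImZ.
have pair_add (u1 v1 : M) (u2 v2 : N) : ((u1 + v1, u2 + v2) : M * N) = (u1, u2) + (v1, v2) by [].
have pair_scl a (u1 : M) (u2 : N) : ((a *: u1, a *: u2) : M * N) = a *: (u1, u2) by [].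
have span_g m : tspan g m -> tspan G (m, 0).
  elim=> [|x hx|a u v _ hu _ hv].
  - exact: span0.
  - by apply: spang; rewrite mem_cat map_f.
  - rewrite -[0 : N](addr0 0) -{1}[0 : N](scaler0 _ a) pair_add pair_scl.
    exact: spanC.
have span_h n : tspan h n -> tspan G (0, n).
  elim=> [|x hx|a u v _ hu _ hv].
  - exact: span0.
  - by apply: spang; rewrite mem_cat [X in _ || X]map_f ?orbT.
  - rewrite -[0 : M](addr0 0) -{1}[0 : M](scaler0 _ a) pair_add pair_scl.
    exact: spanC.
have Im0n p : p \in t -> Im (0, p.2).
  by move=> hp; apply: spanG_Im; apply: span_h; apply: spang; apply: map_f.
have Imf0 p : p \in t -> Im (f p.2, 0).
  move=> hp; apply: spanG_Im; apply: span_g.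
  by apply: (hg1 (p.1, f p.2)); apply/mapP; exists p.
have Imfn p : p \in t -> Im (f p.2, p.2).
  move=> hp; have -> : ((f p.2, p.2) : M * N) = (f p.2, 0) + (0, p.2).
    by rewrite -pair_add addr0 add0r.
  by apply: ImD; [apply: Imf0|apply: Im0n].
pose A := fun q : Quot hK => exists n, psi q = (f n, n).
pose B := fun q : Quot hK => (psi q).1 = 0.
pose Ml (b : bool) := if b then A else B.
have hsub b : is_submodule (Ml b).
  case: b; split.
  - by exists 0; rewrite (lin0 hpsi) (lin0 hf).
  - move=> a u v [nu hu] [nv hv]; exists (a *: nu + nv).
    by rewrite hpsi hu hv hf.
  - by rewrite /Ml /B (lin0 hpsi).
  - move=> a u v hu hv; rewrite /Ml /B hpsi.
    have -> : (a *: psi u + psi v).1 = a *: (psi u).1 + (psi v).1 by [].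
    by rewrite hu hv scaler0 addr0.
have hint q : (forall b, Ml b q) -> q = 0.
  move=> hq; case: (hq true) => n e; have := hq false; rewrite /Ml /B e /= => fn0.
  have n0 : n = 0 by apply: finj; rewrite fn0 linear0.
  by apply: psi_inj; rewrite e n0 linear0 (lin0 hpsi).
have hX : fin_gen (Quot hK).
  exact: (fin_gen_quot hK (fin_gen_free_gen (rV_fin_gen_free R k))).
pose T := map (fun p => (p.1, lft (f p.2, p.2))) t.
pose TB := map (fun p => (p.1, lft (0, p.2))) t.
have hT : tensor_zero T.
  apply: (h4 _ hX _ _ hsub hint) => -[].
  - exists T; split => // x /mapP[p hp ->] /=.
    by exists p.2; apply: lftK; apply: Imfn.
  - exists TB; split.
      move=> x /mapP[p hp ->]; rewrite /Ml /B /= (lftK _ (Im0n p hp)). reflexivity.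
    move=> P b hb; rewrite -!/(bsum b _).
    pose b' (s : S) (m : M) := b s (lft (m, 0)).
    have hb' : bilinear_on (tspan g) b'.
      case: hb => h1 h2 h3 h4'; split.
      - by move=> *; rewrite /b' h1.
      - move=> s m1 m2 hm1 hm2; rewrite /b'.
        have -> : ((m1 + m2, 0) : M * N) = (m1, 0) + (m2, 0) by rewrite -pair_add addr0.
        by rewrite lft_add ?h2 //; apply: spanG_Im; apply: span_g.
      - by move=> *; rewrite /b' h3.
      - move=> r s m hm; rewrite /b'.
        have -> : ((r *: m, 0) : M * N) = r *: (m, 0) by rewrite -pair_scl scaler0.
        by rewrite lft_scl ?h4' //; apply: spanG_Im; apply: span_g.
    have := hg3 P b' hb'; rewrite bsum_nil => e0.
    rewrite /bsum !big_map.
    transitivity (\sum_(p <- t) (b' p.1 (f p.2) + b p.1 (lft (0, p.2)))).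
      apply: eq_big_seq => p hp /=; rewrite /b'.
      case: hb => _ h2 _ _; rewrite -h2 -lft_add; last 2 first.
      - exact: Imf0.
      - exact: Im0n.
      by rewrite -pair_add addr0 add0r.
    rewrite big_split /=.
    rewrite /bsum /tmap big_map /= in e0.
    by rewrite e0 add0r.
pose rho (q : Quot hK) := (psi q).2.
have hrho : lin rho.
  by move=> a q1 q2; rewrite /rho hpsi.
have := teq_tmap hrho hT.
have -> : tmap rho T = t.
  rewrite /tmap /T -map_comp -[RHS]map_id; apply/eq_in_map => p hp /=.
  rewrite /rho lftK; [by case: p hp|exact: Imfn].
by [].
Qed.

Lemma step41 : cond4 -> intersection_flat S.
Proof. by move=> h4; split; [apply: step41_flat|apply: step41_sharp]. Qed.

End Step41.

Unset Implicit Arguments.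

Theorem proposition5p6 (R : comPzRingType) (S : lmodType R) :
  [<-> intersection_flat S;
       forall (M : lmodType R), fin_gen M ->
         forall (L : Type) (Ml : L -> M -> Prop),
           (forall l, is_submodule (Ml l)) -> prop_sharp S Ml;
       forall (M : lmodType R), fin_gen_free M ->
         forall (L : Type) (Ml : L -> M -> Prop),
           (forall l, is_submodule (Ml l)) -> prop_sharp S Ml;
       forall (M : lmodType R), fin_gen M ->
         forall (L : Type) (Ml : L -> M -> Prop),
           (forall l, is_submodule (Ml l)) ->
           (forall m : M, (forall l, Ml l m) -> m = 0) ->
           forall t : tensor_expr S M,
             (forall l, in_tensor_image (Ml l) t) -> tensor_zero t].
Proof.
tfae.
- by case.
- by move=> h2 M hM; apply: h2; apply: fin_gen_free_gen.
- exact: step34.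
- exact: step41.
Qed.
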